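(* Every relative equilibrium associated to an acute triangle fixed-point configuration is Lyapunov stable on $\mathbb S^1$. Explicitly: let $m_1,m_2,m_3>0$, let $(\alpha,\beta)$ with $0<\alpha<\pi$, $0<\beta<\pi$, $\pi<\alpha+\beta<2\pi$ be such that the configuration with $m_1,m_2,m_3$ on the equator at longitudes $0,\alpha,\alpha+\beta$ is a fixed point, and let $\omega\neq0$. Then the point $X_1=(\phi_1,\phi_2,p_{\phi_1},p_{\phi_2})=(\alpha,\ \beta+\nu_1\alpha,\ 0,\ 0)$ is a Lyapunov stable equilibrium of the Hamiltonian system on $\{(\phi_1,\phi_2,p_{\phi_1},p_{\phi_2})\}$ with symplectic form $dp_{\phi_1}\wedge d\phi_1+dp_{\phi_2}\wedge d\phi_2$ and Hamiltonian $$H_{\bar m\omega}=\frac12\Big(\frac{p_{\phi_1}^2}{\nu_3}+\frac{p_{\phi_2}^2}{\nu_4}\Big)-V(\phi_1,\phi_2)+\frac{\bar m\omega^2}{2}.$$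
   Context: On the unit sphere, masses on the equator at longitudes $\varphi_i$ have geodesic distances $d_{ij}\in(0,\pi)$; the force function is $V=\sum_{i<j}m_im_j\cot d_{ij}$ and a fixed point is a critical point of $V$ (on the configuration space of $(\mathbb S^2)^3$ with $d_{ij}\notin\{0,\pi\}$). The associated relative equilibrium is the motion $\theta_i(t)=\pi/2$, $\varphi_i(t)=\varphi_i(0)+\omega t$ (uniform rotation of the fixed point about the $z$-axis). Restricted to the equator the Hamiltonian is $\sum_i\frac{p_{\varphi_i}^2}{2m_i}-V$, and the angular momentum is $p_{\varphi_1}+p_{\varphi_2}+p_{\varphi_3}$, equal to $\bar m\omega$ along the relative equilibrium. Jacobi-type coordinates: $\bar m=m_1+m_2+m_3$, $\nu_1=\frac{m_1}{m_1+m_2}$, $\nu_2=\frac{m_2}{m_1+m_2}$, $\nu_3=\frac{m_1m_2}{m_1+m_2}$, $\nu_4=\frac{(m_1+m_2)m_3}{\bar m}$, $\phi_1=\varphi_2-\varphi_1$, $\phi_2=\varphi_3-\nu_1\varphi_1-\nu_2\varphi_2$, $p_{\phi_1}=\nu_3\dot\phi_1$, $p_{\phi_2}=\nu_4\dot\phi_2$; in these variables $V(\phi_1,\phi_2)=m_1m_2\cot\phi_1+m_2m_3\cot(\phi_2-\nu_1\phi_1)-m_1m_3\cot(\phi_2+\nu_2\phi_1)$. The system with Hamiltonian $H_{\bar m\omega}$ is the reduction of the equatorial problem to angular momentum $\bar m\omega$ modulo rotations; by definition, the relative equilibrium is Lyapunov stable on $\mathbb S^1$ if the corresponding rest point $X_1$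 of this reduced system is Lyapunov stable. *)

(* Defs.v *)
From Stdlib Require Import Reals.
From Coquelicot Require Import Coquelicot.
Open Scope R_scope.

Definition cot (x : R) : R := cos x / sin x.

(** Force function on (S^2)^3 in spherical coordinates (theta_i colatitude,
    phi_i longitude).  cos d_ij is the dot product of the unit vectors;
    since d_ij is in (0,pi), sin d_ij = sqrt (1 - cos^2 d_ij). *)
Definition cos_dist (th1 ph1 th2 ph2 : R) : R :=
  cos th1 * cos th2 + sin th1 * sin th2 * cos (ph1 - ph2).

Definition cot_dist (th1 ph1 th2 ph2 : R) : R :=
  let c := cos_dist th1 ph1 th2 ph2 in c / sqrt (1 - c ^ 2).

Definition Vsph (m1 m2 m3 th1 ph1 th2 ph2 th3 ph3 : R) : R :=
  m1 * m2 * cot_dist th1 ph1 th2 ph2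
  + m1 * m3 * cot_dist th1 ph1 th3 ph3
  + m2 * m3 * cot_dist th2 ph2 th3 ph3.

Definition is_fixed_point (m1 m2 m3 th1 ph1 th2 ph2 th3 ph3 : R) : Prop :=
  Derive (fun x => Vsph m1 m2 m3 x ph1 th2 ph2 th3 ph3) th1 = 0 /\
  Derive (fun x => Vsph m1 m2 m3 th1 x th2 ph2 th3 ph3) ph1 = 0 /\
  Derive (fun x => Vsph m1 m2 m3 th1 ph1 x ph2 th3 ph3) th2 = 0 /\
  Derive (fun x => Vsph m1 m2 m3 th1 ph1 th2 x th3 ph3) ph2 = 0 /\
  Derive (fun x => Vsph m1 m2 m3 th1 ph1 th2 ph2 x ph3) th3 = 0 /\
  Derive (fun x => Vsph m1 m2 m3 th1 ph1 th2 ph2 th3 x) ph3 = 0.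

Definition equatorial_fixed_point (m1 m2 m3 a b : R) : Prop :=
  is_fixed_point m1 m2 m3 (PI/2) 0 (PI/2) a (PI/2) (a + b).

Definition mbar (m1 m2 m3 : R) := m1 + m2 + m3.
Definition nu1 (m1 m2 : R) := m1 / (m1 + m2).
Definition nu2 (m1 m2 : R) := m2 / (m1 + m2).
Definition nu3 (m1 m2 : R) := m1 * m2 / (m1 + m2).
Definition nu4 (m1 m2 m3 : R) := (m1 + m2) * m3 / mbar m1 m2 m3.

Definition Vred (m1 m2 m3 f1 f2 : R) : R :=
  m1 * m2 * cot f1 + m2 * m3 * cot (f2 - nu1 m1 m2 * f1)
  - m1 * m3 * cot (f2 + nu2 m1 m2 * f1).

(** Domain of the reduced system: no collisions / antipodal pairs. *)
Definition in_domain (m1 m2 f1 f2 : R) : Prop :=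
  sin f1 <> 0 /\ sin (f2 - nu1 m1 m2 * f1) <> 0 /\ sin (f2 + nu2 m1 m2 * f1) <> 0.

Definition Hred (m1 m2 m3 w f1 f2 p1 p2 : R) : R :=
  / 2 * (p1 ^ 2 / nu3 m1 m2 + p2 ^ 2 / nu4 m1 m2 m3)
  - Vred m1 m2 m3 f1 f2 + mbar m1 m2 m3 * w ^ 2 / 2.

Definition is_solution (m1 m2 m3 w T : R) (f1 f2 p1 p2 : R -> R) : Prop :=
  forall t, 0 <= t <= T ->
    in_domain m1 m2 (f1 t) (f2 t) /\
    is_derive f1 t (Derive (fun x => Hred m1 m2 m3 w (f1 t) (f2 t) x (p2 t)) (p1 t)) /\
    is_derive f2 t (Derive (fun x => Hred m1 m2 m3 w (f1 t) (f2 t) (p1 t) x) (p2 t)) /\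
    is_derive p1 t (- Derive (fun x => Hred m1 m2 m3 w x (f2 t) (p1 t) (p2 t)) (f1 t)) /\
    is_derive p2 t (- Derive (fun x => Hred m1 m2 m3 w (f1 t) x (p1 t) (p2 t)) (f2 t)).

Definition dist4 (a1 a2 a3 a4 b1 b2 b3 b4 : R) : R :=
  sqrt ((a1 - b1) ^ 2 + (a2 - b2) ^ 2 + (a3 - b3) ^ 2 + (a4 - b4) ^ 2).

Definition lyapunov_stable (m1 m2 m3 w e1 e2 e3 e4 : R) : Prop :=
  forall eps, 0 < eps -> exists delta, 0 < delta /\
    forall T f1 f2 p1 p2, 0 <= T ->
      is_solution m1 m2 m3 w T f1 f2 p1 p2 ->
      dist4 (f1 0) (f2 0) (p1 0) (p2 0) e1 e2 e3 e4 < delta ->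
      forall t, 0 <= t <= T ->
        dist4 (f1 t) (f2 t) (p1 t) (p2 t) e1 e2 e3 e4 < eps.

(* Main.v *)
Require Import Defs.
From Stdlib Require Import Reals Lra Psatz.
From Coquelicot Require Import Coquelicot.
Open Scope R_scope.

Definition cot1 (x : R) : R := - / (sin x ^ 2).
Definition cot2 (x : R) : R := 2 * cos x / (sin x ^ 3).

Lemma is_derive_cot x : sin x <> 0 -> is_derive cot x (cot1 x).
Proof.
  intros H. unfold cot, cot1. auto_derive; auto.
  assert (E := sin2_cos2 x). unfold Rsqr in E.
  field_simplify; auto. f_equal. nra.
Qed.

Lemma is_derive_cot1 x : sin x <> 0 -> is_derive cot1 x (cot2 x).
Proof.
  intros H. unfold cot1, cot2. auto_derive.
  - intro H0. apply H. nra.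
  - field. auto.
Qed.

Lemma is_derive_lin (f : R -> R) (df c d s : R) :
  is_derive f (c + s * d) df -> is_derive (fun s => f (c + s * d)) s (d * df).
Proof.
  intros H. apply (is_derive_comp f (fun s => c + s * d)); auto.
  auto_derive; auto; ring.
Qed.
Lemma deriv_cont (f : R -> R) x l : is_derive f x l -> continuity_pt f x.
Proof.
  intros H. apply continuity_pt_filterlim. apply (ex_derive_continuous (V:=R_NormedModule)). exists l; auto.
Qed.

Lemma cont_eps (f : R -> R) x0 : continuity_pt f x0 ->
  forall eps, 0 < eps -> exists d, 0 < d /\ forall x, Rabs (x - x0) < d -> Rabs (f x - f x0) < eps.
Proof.
  intros C eps He. destruct (C eps He) as [d [Hd P]]. exists d; split; auto.
  intros x Hx. destruct (Req_dec x x0) as [->|N].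
  - rewrite Rminus_diag, Rabs_R0; auto.
  - apply (P x). split. split. exact I. auto. exact Hx.
Qed.

Lemma near_cot2 x0 eta : sin x0 <> 0 -> 0 < eta -> exists rho, 0 < rho /\
  forall x, Rabs (x - x0) <= rho -> sin x <> 0 /\ Rabs (cot2 x - cot2 x0) <= eta.
Proof.
  intros Hs He.
  assert (Cs : continuity_pt sin x0) by (apply continuity_sin).
  assert (Cc : continuity_pt cot2 x0).
  { apply continuity_pt_filterlim. apply (ex_derive_continuous (V:=R_NormedModule)).
    unfold cot2. auto_derive. repeat apply Rmult_integral_contrapositive_currified; auto; lra. }
  destruct (cont_eps _ _ Cs (Rabs (sin x0)) ltac:(apply Rabs_pos_lt; auto)) as [d1 [H1 P1]].
  destruct (cont_eps _ _ Cc eta He) as [d2 [H2 P2]].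
  exists (Rmin d1 d2 / 2). split. { unfold Rmin; destruct Rle_dec; lra. }
  intros x Hx. assert (Rmin d1 d2 <= d1) by apply Rmin_l. assert (Rmin d1 d2 <= d2) by apply Rmin_r.
  assert (0 < Rmin d1 d2) by (unfold Rmin; destruct Rle_dec; lra).
  split.
  - intro Z. specialize (P1 x ltac:(lra)). rewrite Z in P1.
    rewrite Rminus_0_l, Rabs_Ropp in P1. lra.
  - left. apply P2. lra.
Qed.
Lemma mono_le (F dF : R -> R) x y : x <= y ->
  (forall s, x <= s <= y -> is_derive F s (dF s)) ->
  (forall s, x <= s <= y -> 0 <= dF s) -> F x <= F y.
Proof.
  intros Hxy HD Hp.
  destruct (MVT_gen F x y dF) as [c [Hc E]].
  - intros s Hs. apply HD. rewrite Rmin_left in Hs by lra. rewrite Rmax_right in Hs by lra. lra.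
  - intros s Hs. apply (deriv_cont _ _ (dF s)). apply HD.
    rewrite Rmin_left in Hs by lra. rewrite Rmax_right in Hs by lra. lra.
  - rewrite Rmin_left in Hc by lra. rewrite Rmax_right in Hc by lra.
    assert (0 <= dF c) by (apply Hp; lra). nra.
Qed.

Lemma const_eq (F dF : R -> R) x y : x <= y ->
  (forall s, x <= s <= y -> is_derive F s (dF s)) ->
  (forall s, x <= s <= y -> dF s = 0) -> F y = F x.
Proof.
  intros Hxy HD Hp.
  destruct (MVT_gen F x y dF) as [c [Hc E]].
  - intros s Hs. apply HD. rewrite Rmin_left in Hs by lra. rewrite Rmax_right in Hs by lra. lra.
  - intros s Hs. apply (deriv_cont _ _ (dF s)). apply HD.
    rewrite Rmin_left in Hs by lra. rewrite Rmax_right in Hs by lra. lra.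
  - rewrite Rmin_left in Hc by lra. rewrite Rmax_right in Hc by lra.
    rewrite Hp in E by lra. lra.
Qed.

Lemma taylor2 (F F1 F2 : R -> R) lo hi :
  (forall s, 0 <= s <= 1 -> is_derive F s (F1 s)) ->
  (forall s, 0 <= s <= 1 -> is_derive F1 s (F2 s)) ->
  F1 0 = 0 ->
  (forall s, 0 <= s <= 1 -> lo <= F2 s <= hi) ->
  lo / 2 <= F 1 - F 0 <= hi / 2.
Proof.
  intros D1 D2 Z B. split.
  - assert (A : forall s, 0 <= s <= 1 -> lo * s <= F1 s).
    { intros s Hs.
      assert (H := mono_le (fun s => F1 s - lo * s) (fun s => F2 s - lo) 0 s ltac:(lra)).
      simpl in H. rewrite Z in H.
      enough (0 - lo * 0 <= F1 s - lo * s) by lra.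
      apply H.
      + intros u Hu. apply (is_derive_minus F1 (fun s => lo * s)). apply D2; lra.
        auto_derive; auto; ring.
      + intros u Hu. specialize (B u ltac:(lra)). lra. }
    assert (H := mono_le (fun s => F s - lo * s ^ 2 / 2) (fun s => F1 s - lo * s) 0 1 ltac:(lra)).
    simpl in H.
    enough (F 0 - lo * 0 ^ 2 / 2 <= F 1 - lo * 1 ^ 2 / 2) by lra.
    apply H.
    + intros u Hu. apply (is_derive_minus F (fun s => lo * s ^ 2 / 2)). apply D1; lra.
      auto_derive; auto; field.
    + intros u Hu. specialize (A u Hu). lra.
  - assert (A : forall s, 0 <= s <= 1 -> F1 s <= hi * s).
    { intros s Hs.
      assert (H := mono_le (fun s => hi * s - F1 s) (fun s => hi - F2 s) 0 s ltac:(lra)).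
      simpl in H. rewrite Z in H.
      enough (hi * 0 - 0 <= hi * s - F1 s) by lra.
      apply H.
      + intros u Hu. apply (is_derive_minus (fun s => hi * s) F1). 
        auto_derive; auto; ring. apply D2; lra.
      + intros u Hu. specialize (B u ltac:(lra)). lra. }
    assert (H := mono_le (fun s => hi * s ^ 2 / 2 - F s) (fun s => hi * s - F1 s) 0 1 ltac:(lra)).
    simpl in H.
    enough (hi * 0 ^ 2 / 2 - F 0 <= hi * 1 ^ 2 / 2 - F 1) by lra.
    apply H.
    + intros u Hu. apply (is_derive_minus (fun s => hi * s ^ 2 / 2) F). 
      auto_derive; auto; field. apply D1; lra.
    + intros u Hu. specialize (A u Hu). lra.
Qed.
Definition cd (u : R) : R := cos u / sqrt (1 - cos u ^ 2).

Lemma cot_dist_eq p q : cot_dist (PI/2) p (PI/2) q = cd (p - q).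
Proof.
  unfold cot_dist, cos_dist, cd. rewrite cos_PI2, sin_PI2. cbv zeta.
  replace (0 * 0 + 1 * 1 * cos (p - q)) with (cos (p - q)) by ring. reflexivity.
Qed.

Lemma is_derive_cd u : sin u <> 0 -> is_derive cd u (- sin u / Rabs (sin u) ^ 3).
Proof.
  intros H.
  assert (E : 1 - cos u ^ 2 = (sin u)²).
  { rewrite sin2. unfold Rsqr. ring. }
  assert (P : 0 < 1 - cos u ^ 2). { rewrite E. apply Rlt_0_sqr. auto. }
  assert (S : sqrt (1 - cos u ^ 2) = Rabs (sin u)). { rewrite E. apply sqrt_Rsqr_abs. }
  assert (A : 0 < Rabs (sin u)) by (apply Rabs_pos_lt; auto).
  unfold cd. auto_derive.
  - replace (1 + - (cos u * (cos u * 1))) with (1 - cos u ^ 2) by ring.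
    rewrite S. repeat split; lra.
  - replace (1 + - (cos u * (cos u * 1))) with (1 - cos u ^ 2) by ring.
    rewrite S.
    assert (R2 : Rabs (sin u) ^ 2 = 1 - cos u ^ 2).
    { rewrite E, (Rsqr_abs (sin u)). unfold Rsqr; ring. }
    field_simplify; try lra.
    replace (Rabs (sin u) ^ 3) with (Rabs (sin u) * Rabs (sin u) ^ 2) by ring.
    rewrite R2. field_simplify; try lra.
    assert (0 < - cos u ^ 2 * Rabs (sin u) + Rabs (sin u)) by nra.
    field. lra.
Qed.

Lemma fp_rel m1 m2 m3 a b :
  0 < a < PI -> 0 < b < PI -> PI < a + b < 2 * PI ->
  equatorial_fixed_point m1 m2 m3 a b ->
  m1 * m2 / sin a ^ 2 = m1 * m3 / sin (a + b) ^ 2 /\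
  m1 * m2 / sin a ^ 2 = m2 * m3 / sin b ^ 2.
Proof.
  intros Ha Hb Hab [_ [F1 [_ [F2 _]]]].
  assert (sa : 0 < sin a) by (apply sin_gt_0; lra).
  assert (sb : 0 < sin b) by (apply sin_gt_0; lra).
  assert (sab : sin (a + b) < 0) by (apply sin_lt_0; lra).
  rewrite (Derive_ext _ (fun x => m1 * m2 * cd (x - a) + m1 * m3 * cd (x - (a + b))
     + m2 * m3 * cd (a - (a + b)))) in F1
    by (intro; unfold Vsph; rewrite !cot_dist_eq; reflexivity).
  rewrite (Derive_ext _ (fun x => m1 * m2 * cd (0 - x) + m1 * m3 * cd (0 - (a + b))
     + m2 * m3 * cd (x - (a + b)))) in F2
    by (intro; unfold Vsph; rewrite !cot_dist_eq; reflexivity).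
  assert (Dc : forall y, sin y <> 0 -> Derive (fun x => cd x) y = - sin y / Rabs (sin y) ^ 3).
  { intros y Hy. apply is_derive_unique. apply is_derive_cd; auto. }
  assert (Ec : forall y, sin y <> 0 -> ex_derive (fun x => cd x) y).
  { intros y Hy. eexists. apply is_derive_cd; auto. }
  assert (sna : sin (0 + - a) = - sin a) by (rewrite Rplus_0_l; apply sin_neg).
  assert (snab : sin (0 + - (a + b)) = - sin (a + b)) by (rewrite Rplus_0_l; apply sin_neg).
  assert (snb : sin (a + - (a + b)) = - sin b) by (replace (a + - (a + b)) with (- b) by ring; apply sin_neg).
  erewrite is_derive_unique in F1.
  2:{ auto_derive. repeat split; apply Ec; lra. reflexivity. }
  erewrite is_derive_unique in F2.
  2:{ auto_derive. repeat split; apply Ec; lra. reflexivity. }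
  rewrite !Dc in F1 by lra. rewrite !Dc in F2 by lra.
  rewrite sna, snab in F1. rewrite sna, snb in F2.
  rewrite ?Rabs_Ropp in F1, F2.
  rewrite (Rabs_right (sin a)) in F1, F2 by lra.
  rewrite (Rabs_right (sin b)) in F2 by lra.
  rewrite (Rabs_left (sin (a + b))) in F1 by lra.
  replace (- - sin a / sin a ^ 3) with (/ sin a ^ 2) in F1, F2 by (field; lra).
  replace (- - sin b / sin b ^ 3) with (/ sin b ^ 2) in F2 by (field; lra).
  replace (- - sin (a + b) / (- sin (a + b)) ^ 3) with (- / sin (a + b) ^ 2) in F1 by (field; lra).
  unfold Rdiv. split; lra.
Qed.

Lemma psd p r s x y : 0 < p -> r * r <= p * s -> 0 <= p * x ^ 2 + 2 * r * x * y + s * y ^ 2.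
Proof.
  intros Hp Hd.
  assert (E : p * (p * x ^ 2 + 2 * r * x * y + s * y ^ 2) = (p * x + r * y) ^ 2 + (p * s - r * r) * y ^ 2) by ring.
  assert (0 <= (p * x + r * y) ^ 2 + (p * s - r * r) * y ^ 2).
  { apply Rplus_le_le_0_compat. apply pow2_ge_0. apply Rmult_le_pos. lra. apply pow2_ge_0. }
  nra.
Qed.

Lemma quad_lb p r s x y : 0 < p -> 0 < p * s - r * r ->
  (p * s - r * r) / (2 * (p + s)) * (x ^ 2 + y ^ 2) <= p * x ^ 2 + 2 * r * x * y + s * y ^ 2.
Proof.
  intros Hp Hd.
  assert (Hs : 0 < s) by nra.
  set (mu := (p * s - r * r) / (2 * (p + s))).
  assert (Hm : 0 < mu) by (unfold mu; apply Rdiv_lt_0_compat; lra).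
  assert (Hm2 : mu * (2 * (p + s)) = p * s - r * r) by (unfold mu; field; lra).
  assert (Hmp : mu < p) by nra.
  assert (Hms : mu < s) by nra.
  assert (Hq : r * r <= (p - mu) * (s - mu)) by nra.
  assert (H := psd (p - mu) r (s - mu) x y ltac:(lra) Hq).
  nra.
Qed.

Lemma quad_ub p r s x y : 
  p * x ^ 2 + 2 * r * x * y + s * y ^ 2 <= (Rabs p + Rabs s + 2 * Rabs r) * (x ^ 2 + y ^ 2).
Proof.
  assert (2 * r * x * y <= Rabs r * (x ^ 2 + y ^ 2)).
  { assert (0 <= (x - y) ^ 2) by apply pow2_ge_0. assert (0 <= (x + y) ^ 2) by apply pow2_ge_0.
    unfold Rabs; destruct Rcase_abs; nra. }
  assert (p * x ^ 2 <= Rabs p * x ^ 2) by (apply Rmult_le_compat_r; [apply pow2_ge_0|apply Rle_abs]).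
  assert (s * y ^ 2 <= Rabs s * y ^ 2) by (apply Rmult_le_compat_r; [apply pow2_ge_0|apply Rle_abs]).
  assert (0 <= Rabs r * x^2) by (apply Rmult_le_pos; [apply Rabs_pos|apply pow2_ge_0]).
  assert (0 <= Rabs r * y^2) by (apply Rmult_le_pos; [apply Rabs_pos|apply pow2_ge_0]).
  assert (0 <= Rabs s * x^2) by (apply Rmult_le_pos; [apply Rabs_pos|apply pow2_ge_0]).
  assert (0 <= Rabs p * y^2) by (apply Rmult_le_pos; [apply Rabs_pos|apply pow2_ge_0]).
  nra.
Qed.

Definition Gf (A B C a b hu hv s : R) : R :=
  - A * cot (a + s * hu) - B * cot (b + s * hv) + C * cot ((a + b) + s * (hu + hv)).
Definition G1 (A B C a b hu hv s : R) : R :=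
  - A * (hu * cot1 (a + s * hu)) - B * (hv * cot1 (b + s * hv)) + C * ((hu + hv) * cot1 ((a + b) + s * (hu + hv))).
Definition G2 (A B C a b hu hv s : R) : R :=
  - A * (hu ^ 2 * cot2 (a + s * hu)) - B * (hv ^ 2 * cot2 (b + s * hv)) + C * ((hu + hv) ^ 2 * cot2 ((a + b) + s * (hu + hv))).

Lemma Dcot y : sin y <> 0 -> Derive (fun x => cot x) y = cot1 y.
Proof. intros; apply is_derive_unique, is_derive_cot; auto. Qed.
Lemma Ecot y : sin y <> 0 -> ex_derive (fun x => cot x) y.
Proof. intros; eexists; apply is_derive_cot; auto. Qed.
Lemma Dcot1 y : sin y <> 0 -> Derive (fun x => cot1 x) y = cot2 y.
Proof. intros; apply is_derive_unique, is_derive_cot1; auto. Qed.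
Lemma Ecot1 y : sin y <> 0 -> ex_derive (fun x => cot1 x) y.
Proof. intros; eexists; apply is_derive_cot1; auto. Qed.

Lemma Gf_deriv A B C a b hu hv s :
  sin (a + s * hu) <> 0 -> sin (b + s * hv) <> 0 -> sin ((a + b) + s * (hu + hv)) <> 0 ->
  is_derive (Gf A B C a b hu hv) s (G1 A B C a b hu hv s) /\
  is_derive (G1 A B C a b hu hv) s (G2 A B C a b hu hv s).
Proof.
  intros H1 H2 H3. unfold Gf, G1, G2. split.
  - auto_derive. repeat split; apply Ecot; auto.
    rewrite !Dcot by auto. ring.
  - auto_derive. repeat split; apply Ecot1; auto.
    rewrite !Dcot1 by auto. ring.
Qed.

Lemma bnd_mul d eta c : Rabs d <= eta -> 0 <= c -> - (eta * c) <= c * d <= eta * c.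
Proof.
  intros Hd Hc. apply Rabs_le_between in Hd. split; nra.
Qed.

Lemma abs_of_sq x r : 0 <= r -> x ^ 2 <= r ^ 2 -> Rabs x <= r.
Proof. intros Hr H. unfold Rabs; destruct Rcase_abs; nra. Qed.

Lemma W_bounds (A B C a b : R) :
  0 < A -> 0 < B -> 0 < C -> 0 < sin a -> 0 < sin b -> sin (a + b) < 0 ->
  A / sin a ^ 2 = C / sin (a + b) ^ 2 -> A / sin a ^ 2 = B / sin b ^ 2 ->
  exists rho mu Lam, 0 < rho /\ 0 < mu /\ 0 < Lam /\ forall hu hv, hu ^ 2 + hv ^ 2 <= rho ^ 2 ->
    mu * (hu ^ 2 + hv ^ 2) <= Gf A B C a b hu hv 1 - Gf A B C a b hu hv 0 <= Lam * (hu ^ 2 + hv ^ 2).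
Proof.
  intros HA HB HC sa sb sab E1 E2.
  set (K := A / sin a ^ 2).
  assert (HK : 0 < K) by (unfold K; apply Rdiv_lt_0_compat; auto; apply pow_lt; auto).
  assert (eA : A = K * sin a ^ 2) by (unfold K; field; lra).
  assert (eB : B = K * sin b ^ 2) by (unfold K; rewrite E2; field; lra).
  assert (eC : C = K * sin (a + b) ^ 2) by (unfold K; rewrite E1; field; lra).
  set (p := - A * cot2 a + C * cot2 (a + b)).
  set (r := C * cot2 (a + b)).
  set (s := - B * cot2 b + C * cot2 (a + b)).
  assert (I1 : sin a * cos (a + b) - cos a * sin (a + b) = - sin b).
  { rewrite <- sin_minus. replace (a - (a + b)) with (- b) by ring. apply sin_neg. }
  assert (I2 : sin b * cos (a + b) - cos b * sin (a + b) = - sin a).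
  { rewrite <- sin_minus. replace (b - (a + b)) with (- a) by ring. apply sin_neg. }
  assert (ep : p = - 2 * K * sin b / (sin a * sin (a + b))).
  { unfold p, cot2. rewrite eA, eC. replace (sin b) with (- (sin a * cos (a + b) - cos a * sin (a + b))) by lra. field. lra. }
  assert (es : s = - 2 * K * sin a / (sin b * sin (a + b))).
  { unfold s, cot2. rewrite eB, eC. replace (sin a) with (- (sin b * cos (a + b) - cos b * sin (a + b))) by lra. field. lra. }
  assert (er : r = 2 * K * cos (a + b) / sin (a + b)).
  { unfold r, cot2. rewrite eC. field. lra. }
  assert (Hp : 0 < p).
  { rewrite ep. assert (sin a * sin (a + b) < 0) by nra.
    replace (- 2 * K * sin b / (sin a * sin (a + b))) with ((2 * K * sin b) / (- (sin a * sin (a + b)))) by (field; lra).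
    apply Rdiv_lt_0_compat; nra. }
  assert (eD : p * s - r * r = 4 * K ^ 2).
  { rewrite ep, es, er. assert (T := sin2_cos2 (a + b)). unfold Rsqr in T.
    field_simplify; try lra.
    replace (cos (a + b) ^ 2) with (1 - sin (a + b) ^ 2) by nra. field. lra. }
  assert (Hs : 0 < s) by nra.
  assert (HD : 0 < p * s - r * r) by (rewrite eD; apply Rmult_lt_0_compat; [lra|apply pow_lt; lra]).
  set (mu0 := (p * s - r * r) / (2 * (p + s))).
  assert (Hmu0 : 0 < mu0) by (unfold mu0; apply Rdiv_lt_0_compat; lra).
  set (L0 := Rabs p + Rabs s + 2 * Rabs r).
  assert (HL0 : 0 <= L0) by (unfold L0; generalize (Rabs_pos p) (Rabs_pos s) (Rabs_pos r); lra).
  set (M := A + B + 2 * C).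
  assert (HM : 0 < M) by (unfold M; lra).
  set (eta := mu0 / (2 * M)).
  assert (Heta : 0 < eta) by (unfold eta; apply Rdiv_lt_0_compat; lra).
  assert (etaM : eta * M = mu0 / 2) by (unfold eta; field; lra).
  destruct (near_cot2 a eta ltac:(lra) Heta) as [ra [Hra Pa]].
  destruct (near_cot2 b eta ltac:(lra) Heta) as [rb [Hrb Pb]].
  destruct (near_cot2 (a + b) eta ltac:(lra) Heta) as [rab [Hrab Pab]].
  set (rho0 := Rmin (Rmin ra rb) rab).
  assert (r1 : rho0 <= ra) by (unfold rho0; generalize (Rmin_l (Rmin ra rb) rab) (Rmin_l ra rb); lra).
  assert (r2 : rho0 <= rb) by (unfold rho0; generalize (Rmin_l (Rmin ra rb) rab) (Rmin_r ra rb); lra).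
  assert (r3 : rho0 <= rab) by (unfold rho0; generalize (Rmin_r (Rmin ra rb) rab); lra).
  assert (r0 : 0 < rho0) by (unfold rho0; unfold Rmin; repeat destruct Rle_dec; lra).
  exists (rho0 / 2), (mu0 / 4), ((L0 + mu0 / 2) / 2).
  split; [lra|]. split; [lra|]. split; [lra|].
  intros hu hv HN.
  assert (Hu : Rabs hu <= rho0 / 2) by (apply abs_of_sq; [lra| generalize (pow2_ge_0 hv); lra]).
  assert (Hv : Rabs hv <= rho0 / 2) by (apply abs_of_sq; [lra| generalize (pow2_ge_0 hu); lra]).
  assert (Huv : Rabs (hu + hv) <= rho0) by (generalize (Rabs_triang hu hv); lra).
  assert (sc : forall t x, 0 <= t <= 1 -> Rabs (t * x) <= Rabs x).
  { intros t x Ht. rewrite Rabs_mult, (Rabs_right t) by lra.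
    generalize (Rabs_pos x); nra. }
  assert (Na : forall t, 0 <= t <= 1 -> sin (a + t * hu) <> 0 /\ Rabs (cot2 (a + t * hu) - cot2 a) <= eta).
  { intros t Ht. apply Pa. replace (a + t * hu - a) with (t * hu) by ring.
    generalize (sc t hu Ht); lra. }
  assert (Nb : forall t, 0 <= t <= 1 -> sin (b + t * hv) <> 0 /\ Rabs (cot2 (b + t * hv) - cot2 b) <= eta).
  { intros t Ht. apply Pb. replace (b + t * hv - b) with (t * hv) by ring.
    generalize (sc t hv Ht); lra. }
  assert (Nab : forall t, 0 <= t <= 1 -> sin ((a + b) + t * (hu + hv)) <> 0 /\ Rabs (cot2 ((a + b) + t * (hu + hv)) - cot2 (a + b)) <= eta).
  { intros t Ht. apply Pab. replace ((a + b) + t * (hu + hv) - (a + b)) with (t * (hu + hv)) by ring.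
    generalize (sc t (hu + hv) Ht); lra. }
  set (N := hu ^ 2 + hv ^ 2).
  assert (HN0 : 0 <= N) by (unfold N; generalize (pow2_ge_0 hu) (pow2_ge_0 hv); lra).
  assert (Qlb := quad_lb p r s hu hv Hp HD).
  assert (Qub := quad_ub p r s hu hv).
  fold mu0 L0 N in Qlb, Qub.
  enough (mu0 * N / 2 / 2 <= Gf A B C a b hu hv 1 - Gf A B C a b hu hv 0 <= (L0 + mu0 / 2) * N / 2) by lra.
  apply (taylor2 _ (G1 A B C a b hu hv) (G2 A B C a b hu hv)).
  - intros t Ht. apply Gf_deriv; [apply Na|apply Nb|apply Nab]; auto.
  - intros t Ht. apply Gf_deriv; [apply Na|apply Nb|apply Nab]; auto.
  - unfold G1, cot1. rewrite !Rmult_0_l, !Rplus_0_r. rewrite eA, eB, eC. field. lra.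
  - intros t Ht.
    destruct (Na t Ht) as [_ da]. destruct (Nb t Ht) as [_ db]. destruct (Nab t Ht) as [_ dab].
    assert (EQ : G2 A B C a b hu hv t - (p * hu ^ 2 + 2 * r * hu * hv + s * hv ^ 2) =
      (A * hu ^ 2) * (- (cot2 (a + t * hu) - cot2 a)) + (B * hv ^ 2) * (- (cot2 (b + t * hv) - cot2 b))
      + (C * (hu + hv) ^ 2) * (cot2 ((a + b) + t * (hu + hv)) - cot2 (a + b))).
    { unfold G2, p, r, s. ring. }
    rewrite <- Rabs_Ropp in da, db.
    assert (B1 := bnd_mul _ _ (A * hu ^ 2) da ltac:(apply Rmult_le_pos; [lra|apply pow2_ge_0])).
    assert (B2 := bnd_mul _ _ (B * hv ^ 2) db ltac:(apply Rmult_le_pos; [lra|apply pow2_ge_0])).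
    assert (B3 := bnd_mul _ _ (C * (hu + hv) ^ 2) dab ltac:(apply Rmult_le_pos; [lra|apply pow2_ge_0])).
    assert (S1 : A * hu ^ 2 + B * hv ^ 2 + C * (hu + hv) ^ 2 <= M * N).
    { unfold M, N. assert (0 <= (hu - hv) ^ 2) by apply pow2_ge_0.
      generalize (pow2_ge_0 hu) (pow2_ge_0 hv). nra. }
    assert (S2 : eta * (A * hu ^ 2) + eta * (B * hv ^ 2) + eta * (C * (hu + hv) ^ 2) <= mu0 / 2 * N).
    { rewrite <- etaM. nra. }
    split; nra.
Qed.



Lemma nu3_pos m1 m2 (H1 : 0 < m1) (H2 : 0 < m2) : 0 < nu3 m1 m2.
Proof. unfold nu3. apply Rdiv_lt_0_compat; nra. Qed.
Lemma nu4_pos m1 m2 m3 (H1 : 0 < m1) (H2 : 0 < m2) (H3 : 0 < m3) : 0 < nu4 m1 m2 m3.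
Proof. unfold nu4, mbar. apply Rdiv_lt_0_compat; nra. Qed.

Lemma DH_p1 m1 m2 m3 w (H1 : 0 < m1) (H2 : 0 < m2) (H3 : 0 < m3) f1 f2 p1 p2 : Derive (fun x => Hred m1 m2 m3 w f1 f2 x p2) p1 = p1 / nu3 m1 m2.
Proof.
  assert (N := nu3_pos m1 m2 H1 H2). apply is_derive_unique. unfold Hred, Vred. auto_derive. auto. field. lra.
Qed.
Lemma DH_p2 m1 m2 m3 w (H1 : 0 < m1) (H2 : 0 < m2) (H3 : 0 < m3) f1 f2 p1 p2 : Derive (fun x => Hred m1 m2 m3 w f1 f2 p1 x) p2 = p2 / nu4 m1 m2 m3.
Proof.
  assert (N := nu4_pos m1 m2 m3 H1 H2 H3). apply is_derive_unique. unfold Hred, Vred. auto_derive. auto. field. lra.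
Qed.
Lemma DH_f1 m1 m2 m3 w (H1 : 0 < m1) (H2 : 0 < m2) (H3 : 0 < m3) f1 f2 p1 p2 : in_domain m1 m2 f1 f2 ->
  Derive (fun x => Hred m1 m2 m3 w x f2 p1 p2) f1 =
   - (m1 * m2 * cot1 f1 - nu1 m1 m2 * (m2 * m3) * cot1 (f2 - nu1 m1 m2 * f1)
      - nu2 m1 m2 * (m1 * m3) * cot1 (f2 + nu2 m1 m2 * f1)).
Proof.
  intros [D1 [D2 D3]]. apply is_derive_unique. unfold Hred, Vred. auto_derive.
  - repeat split; apply Ecot; auto.
  - unfold Rminus in *. rewrite !Dcot by auto. ring.
Qed.
Lemma DH_f2 m1 m2 m3 w (H1 : 0 < m1) (H2 : 0 < m2) (H3 : 0 < m3) f1 f2 p1 p2 : in_domain m1 m2 f1 f2 ->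
  Derive (fun x => Hred m1 m2 m3 w f1 x p1 p2) f2 =
   - (m2 * m3 * cot1 (f2 - nu1 m1 m2 * f1) - m1 * m3 * cot1 (f2 + nu2 m1 m2 * f1)).
Proof.
  intros [D1 [D2 D3]]. apply is_derive_unique. unfold Hred, Vred. auto_derive.
  - repeat split; apply Ecot; auto.
  - unfold Rminus in *. rewrite !Dcot by auto. ring.
Qed.

Lemma energy m1 m2 m3 w (H1 : 0 < m1) (H2 : 0 < m2) (H3 : 0 < m3) T f1 f2 p1 p2 : is_solution m1 m2 m3 w T f1 f2 p1 p2 ->
  forall t, 0 <= t <= T ->
  Hred m1 m2 m3 w (f1 t) (f2 t) (p1 t) (p2 t) = Hred m1 m2 m3 w (f1 0) (f2 0) (p1 0) (p2 0).
Proof.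
  intros HS t Ht.
  apply (const_eq (fun t => Hred m1 m2 m3 w (f1 t) (f2 t) (p1 t) (p2 t)) (fun _ => 0) 0 t); try lra;
   [| intros; reflexivity].
  intros u Hu. assert (Hu' : 0 <= u <= T) by lra.
  destruct (HS u Hu') as [Dom [d1 [d2 [d3 d4]]]].
  rewrite DH_p1 in d1 by auto. rewrite DH_p2 in d2 by auto. rewrite DH_f1 in d3 by auto. rewrite DH_f2 in d4 by auto.
  destruct Dom as [D1 [D2 D3]].
  assert (N3 := nu3_pos m1 m2 H1 H2). assert (N4 := nu4_pos m1 m2 m3 H1 H2 H3).
  unfold Hred, Vred. auto_derive.
  - repeat split; try (eexists; eassumption); apply Ecot; auto.
  - change (fun x : R => f1 x) with f1. change (fun x : R => f2 x) with f2.
    change (fun x : R => p1 x) with p1. change (fun x : R => p2 x) with p2.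
    rewrite (is_derive_unique _ _ _ d1), (is_derive_unique _ _ _ d2),
      (is_derive_unique _ _ _ d3), (is_derive_unique _ _ _ d4).
    unfold Rminus in *. rewrite !Dcot by auto.
    assert (nu1 m1 m2 + nu2 m1 m2 = 1) by (unfold nu1, nu2; field; lra).
    field. lra.
Qed.


Lemma exd_cont (f : R -> R) x : ex_derive f x -> continuity_pt f x.
Proof. intros [l H]. apply (deriv_cont f x l H). Qed.

Lemma Hdiff m1 m2 m3 w a b f1 f2 p1 p2 : 0 < m1 -> 0 < m2 ->
  Hred m1 m2 m3 w f1 f2 p1 p2 - Hred m1 m2 m3 w a (b + nu1 m1 m2 * a) 0 0 =
  / 2 * (p1 ^ 2 / nu3 m1 m2 + p2 ^ 2 / nu4 m1 m2 m3) +
  (Gf (m1 * m2) (m2 * m3) (m1 * m3) a b (f1 - a) (f2 - nu1 m1 m2 * f1 - b) 1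
   - Gf (m1 * m2) (m2 * m3) (m1 * m3) a b (f1 - a) (f2 - nu1 m1 m2 * f1 - b) 0).
Proof.
  intros Hm1 Hm2.
  assert (En : nu2 m1 m2 = 1 - nu1 m1 m2) by (unfold nu1, nu2; field; lra).
  unfold Hred, Vred, Gf. rewrite En.
  replace (a + 1 * (f1 - a)) with f1 by ring.
  replace (b + 1 * (f2 - nu1 m1 m2 * f1 - b)) with (f2 - nu1 m1 m2 * f1) by ring.
  replace (a + b + 1 * (f1 - a + (f2 - nu1 m1 m2 * f1 - b))) with (f2 + (1 - nu1 m1 m2) * f1) by ring.
  replace (a + 0 * (f1 - a)) with a by ring.
  replace (b + 0 * (f2 - nu1 m1 m2 * f1 - b)) with (b + nu1 m1 m2 * a - nu1 m1 m2 * a) by ring.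
  replace (a + b + 0 * (f1 - a + (f2 - nu1 m1 m2 * f1 - b))) with (b + nu1 m1 m2 * a + (1 - nu1 m1 m2) * a) by ring.
  unfold Rminus, Rdiv. ring.
Qed.

Theorem theorem3 (m1 m2 m3 a b w : R) :
  0 < m1 -> 0 < m2 -> 0 < m3 ->
  0 < a < PI -> 0 < b < PI -> PI < a + b < 2 * PI ->
  equatorial_fixed_point m1 m2 m3 a b ->
  w <> 0 ->
  lyapunov_stable m1 m2 m3 w a (b + nu1 m1 m2 * a) 0 0.
Proof.
  intros Hm1 Hm2 Hm3 Ha Hb Hab Hfp Hw.
  destruct (fp_rel m1 m2 m3 a b Ha Hb Hab Hfp) as [E1 E2].
  assert (sa : 0 < sin a) by (apply sin_gt_0; lra).
  assert (sb : 0 < sin b) by (apply sin_gt_0; lra).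
  assert (sab : sin (a + b) < 0) by (apply sin_lt_0; lra).
  destruct (W_bounds (m1 * m2) (m2 * m3) (m1 * m3) a b ltac:(nra) ltac:(nra) ltac:(nra) sa sb sab E1 E2)
    as [rho [mu [Lam [Hrho [Hmu [HLam WB]]]]]].
  assert (N3 := nu3_pos m1 m2 Hm1 Hm2). assert (N4 := nu4_pos m1 m2 m3 Hm1 Hm2 Hm3).
  set (n1 := nu1 m1 m2).
  assert (Hn1 : 0 < n1 < 1).
  { unfold n1, nu1. split. apply Rdiv_lt_0_compat; lra.
    apply (Rmult_lt_reg_r (m1 + m2)); [lra|]. unfold Rdiv. rewrite Rmult_assoc, Rinv_l by lra. lra. }
  set (k3 := / (2 * nu3 m1 m2)). set (k4 := / (2 * nu4 m1 m2 m3)).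
  assert (Hk3 : 0 < k3) by (unfold k3; apply Rinv_0_lt_compat; lra).
  assert (Hk4 : 0 < k4) by (unfold k4; apply Rinv_0_lt_compat; lra).
  set (c := Rmin mu (Rmin k3 k4)).
  set (C' := Rmax Lam (Rmax k3 k4)).
  assert (Hc : 0 < c) by (unfold c, Rmin; repeat destruct Rle_dec; lra).
  assert (Hc1 : c <= mu) by (unfold c; apply Rmin_l).
  assert (Hc2 : c <= k3) by (unfold c; generalize (Rmin_r mu (Rmin k3 k4)) (Rmin_l k3 k4); lra).
  assert (Hc3 : c <= k4) by (unfold c; generalize (Rmin_r mu (Rmin k3 k4)) (Rmin_r k3 k4); lra).
  assert (HC1 : Lam <= C') by (unfold C'; apply Rmax_l).
  assert (HC2 : k3 <= C') by (unfold C'; generalize (Rmax_r Lam (Rmax k3 k4)) (Rmax_l k3 k4); lra).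
  assert (HC3 : k4 <= C') by (unfold C'; generalize (Rmax_r Lam (Rmax k3 k4)) (Rmax_r k3 k4); lra).
  set (Nf := fun f1 f2 p1 p2 => (f1 - a) ^ 2 + (f2 - n1 * f1 - b) ^ 2 + p1 ^ 2 + p2 ^ 2).
  set (H0 := Hred m1 m2 m3 w a (b + nu1 m1 m2 * a) 0 0).
  assert (EB : forall f1 f2 p1 p2, (f1 - a) ^ 2 + (f2 - n1 * f1 - b) ^ 2 <= rho ^ 2 ->
     c * Nf f1 f2 p1 p2 <= Hred m1 m2 m3 w f1 f2 p1 p2 - H0 <= C' * Nf f1 f2 p1 p2).
  { intros f1 f2 p1 p2 Hr. unfold H0. rewrite Hdiff by auto.
    destruct (WB (f1 - a) (f2 - nu1 m1 m2 * f1 - b) Hr) as [W1 W2].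
    fold n1 in W1, W2 |- *. unfold Nf.
    assert (e3 : / 2 * (p1 ^ 2 / nu3 m1 m2 + p2 ^ 2 / nu4 m1 m2 m3) = k3 * p1 ^ 2 + k4 * p2 ^ 2)
      by (unfold k3, k4; field; lra).
    rewrite e3.
    set (X := (f1 - a) ^ 2 + (f2 - n1 * f1 - b) ^ 2) in *.
    assert (0 <= X) by (unfold X; generalize (pow2_ge_0 (f1 - a)) (pow2_ge_0 (f2 - n1 * f1 - b)); lra).
    generalize (pow2_ge_0 p1) (pow2_ge_0 p2). intros.
    split; nra. }
  assert (rel1 : forall x y, (y - n1 * x) ^ 2 <= 2 * y ^ 2 + 2 * x ^ 2).
  { intros x y. assert (0 <= (y + n1 * x) ^ 2) by apply pow2_ge_0.
    assert (n1 ^ 2 <= 1) by nra. assert (0 <= x ^ 2) by apply pow2_ge_0.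
    assert (n1 ^ 2 * x ^ 2 <= 1 * x ^ 2) by (apply Rmult_le_compat_r; lra). nra. }
  assert (rel2 : forall x y, y ^ 2 <= 2 * (y - n1 * x) ^ 2 + 2 * x ^ 2).
  { intros x y. assert (0 <= (y - n1 * x - n1 * x) ^ 2) by apply pow2_ge_0.
    assert (n1 ^ 2 <= 1) by nra. assert (0 <= x ^ 2) by apply pow2_ge_0.
    assert (n1 ^ 2 * x ^ 2 <= 1 * x ^ 2) by (apply Rmult_le_compat_r; lra). nra. }
  set (D4 := fun f1 f2 p1 p2 => (f1 - a) ^ 2 + (f2 - (b + n1 * a)) ^ 2 + (p1 - 0) ^ 2 + (p2 - 0) ^ 2).
  assert (ND : forall f1 f2 p1 p2, Nf f1 f2 p1 p2 <= 3 * D4 f1 f2 p1 p2).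
  { intros. unfold Nf, D4.
    replace (f2 - n1 * f1 - b) with ((f2 - (b + n1 * a)) - n1 * (f1 - a)) by ring.
    generalize (rel1 (f1 - a) (f2 - (b + n1 * a))) (pow2_ge_0 (f1 - a)) (pow2_ge_0 (f2 - (b + n1 * a)))
      (pow2_ge_0 p1) (pow2_ge_0 p2). rewrite !Rminus_0_r. lra. }
  assert (DN : forall f1 f2 p1 p2, D4 f1 f2 p1 p2 <= 3 * Nf f1 f2 p1 p2).
  { intros. unfold Nf, D4.
    replace (f2 - n1 * f1 - b) with ((f2 - (b + n1 * a)) - n1 * (f1 - a)) by ring.
    generalize (rel2 (f1 - a) (f2 - (b + n1 * a))) (pow2_ge_0 (f1 - a)) (pow2_ge_0 ((f2 - (b + n1 * a)) - n1 * (f1 - a)))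
      (pow2_ge_0 p1) (pow2_ge_0 p2). rewrite !Rminus_0_r. lra. }
  assert (NX : forall f1 f2 p1 p2, (f1 - a) ^ 2 + (f2 - n1 * f1 - b) ^ 2 <= Nf f1 f2 p1 p2).
  { intros. unfold Nf. generalize (pow2_ge_0 p1) (pow2_ge_0 p2). lra. }
  intros eps Heps.
  set (sigma := Rmin (eps ^ 2 / 3) (rho ^ 2)).
  assert (Hsig : 0 < sigma).
  { assert (0 < eps ^ 2) by (apply pow_lt; lra). assert (0 < rho ^ 2) by (apply pow_lt; lra).
    unfold sigma, Rmin; destruct Rle_dec; lra. }
  assert (Hs1 : sigma <= eps ^ 2 / 3) by apply Rmin_l.
  assert (Hs2 : sigma <= rho ^ 2) by apply Rmin_r.
  assert (HC' : 0 < C') by lra.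
  set (q := Rmin sigma (c * sigma / C') / 6).
  assert (Hcs : 0 < c * sigma / C') by (apply Rdiv_lt_0_compat; nra).
  assert (Hq : 0 < q) by (unfold q, Rmin; destruct Rle_dec; lra).
  assert (Hq1 : 6 * q <= sigma) by (unfold q; generalize (Rmin_l sigma (c * sigma / C')); lra).
  assert (Hq2 : 6 * q <= c * sigma / C') by (unfold q; generalize (Rmin_r sigma (c * sigma / C')); lra).
  exists (sqrt q). split; [apply sqrt_lt_R0; auto|].
  intros T f1 f2 p1 p2 HT HS Hd0 t Ht.
  unfold dist4 in Hd0 |- *. apply sqrt_lt_0_alt in Hd0.
  fold n1 in Hd0 |- *.
  change ((f1 0 - a) ^ 2 + (f2 0 - (b + n1 * a)) ^ 2 + (p1 0 - 0) ^ 2 + (p2 0 - 0) ^ 2)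
    with (D4 (f1 0) (f2 0) (p1 0) (p2 0)) in Hd0.
  change ((f1 t - a) ^ 2 + (f2 t - (b + n1 * a)) ^ 2 + (p1 t - 0) ^ 2 + (p2 t - 0) ^ 2)
    with (D4 (f1 t) (f2 t) (p1 t) (p2 t)).
  assert (N0 : Nf (f1 0) (f2 0) (p1 0) (p2 0) < 3 * q) by (generalize (ND (f1 0) (f2 0) (p1 0) (p2 0)); lra).
  assert (Hen := energy m1 m2 m3 w Hm1 Hm2 Hm3 T f1 f2 p1 p2 HS).
  assert (EB0 := EB (f1 0) (f2 0) (p1 0) (p2 0) ltac:(generalize (NX (f1 0) (f2 0) (p1 0) (p2 0)); lra)).
  assert (C'N0 : C' * Nf (f1 0) (f2 0) (p1 0) (p2 0) < c * sigma / 2).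
  { assert (C' * (c * sigma / C') = c * sigma) by (field; lra).
    assert (0 <= Nf (f1 0) (f2 0) (p1 0) (p2 0)) by (unfold Nf; generalize (pow2_ge_0 (f1 0 - a)) (pow2_ge_0 (f2 0 - n1 * f1 0 - b)) (pow2_ge_0 (p1 0)) (pow2_ge_0 (p2 0)); lra).
    nra. }
  assert (Nt : Nf (f1 t) (f2 t) (p1 t) (p2 t) < sigma).
  { destruct (Rlt_le_dec (Nf (f1 t) (f2 t) (p1 t) (p2 t)) sigma) as [L|L]; auto. exfalso.
    assert (EX : exists t0, 0 <= t0 <= t /\ Nf (f1 t0) (f2 t0) (p1 t0) (p2 t0) = sigma).
    { destruct (Req_dec (Nf (f1 t) (f2 t) (p1 t) (p2 t)) sigma) as [Eq|Ne].
      - exists t; split; [lra|auto].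
      - assert (tpos : 0 < t).
        { destruct (Req_dec t 0) as [->|Nz]; [lra|lra]. }
        destruct (Ranalysis5.IVT_interv (fun u => Nf (f1 u) (f2 u) (p1 u) (p2 u) - sigma) 0 t)
          as [t0 [Ht0 E0]].
        + intros u Hu. destruct (HS u ltac:(lra)) as [_ [d1 [d2 [d3 d4]]]].
          apply exd_cont. unfold Nf. auto_derive.
          repeat split; eexists; eassumption.
        + auto.
        + simpl. lra.
        + simpl. lra.
        + exists t0. split; auto. simpl in E0. lra. }
    destruct EX as [t0 [Ht0 E0]].
    assert (EBt := EB (f1 t0) (f2 t0) (p1 t0) (p2 t0) ltac:(generalize (NX (f1 t0) (f2 t0) (p1 t0) (p2 t0)); lra)).
    rewrite (Hen t0 ltac:(lra)) in EBt. rewrite E0 in EBt. assert (0 < c * sigma) by nra. lra. }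
  rewrite <- (sqrt_pow2 eps) by lra.
  apply sqrt_lt_1_alt. split.
  - unfold D4. generalize (pow2_ge_0 (f1 t - a)) (pow2_ge_0 (f2 t - (b + n1 * a))) (pow2_ge_0 (p1 t - 0)) (pow2_ge_0 (p2 t - 0)). lra.
  - generalize (DN (f1 t) (f2 t) (p1 t) (p2 t)). lra.
Qed.
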